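(* Let $n>p>1$ with $p\in(1,2]$, let $f,k$ be $C^1$ functions satisfying: (F) $f(u)=u|u|^{q-2}b(u)$ with $q>2$, $b\in C^1(\mathbb R)$, $b>0$ on $(-d^-,d^+)$ for some $d^\pm>0$, $b(-d^-)=b(d^+)=0$; (K) $k(r)=h(r)r^\delta>0$ on $(0,\infty)$ with $h>0$, $\delta>-p$, $\lim_{r\to0}h(r)\in(0,\infty)$, $\lim_{r\to\infty}h(r)\in(0,\infty)$, $\limsup_{r\to0}h'(r)r<+\infty$, $\lim_{r\to\infty}h'(r)r^{1+\varpi}=0$ for some $\varpi>0$. Let $l:=p\frac{q+\delta}{p+\delta}>\frac{np}{n-p}$, $\alpha_l=\frac{p}{l-p}$, $\beta_l=(\alpha_l+1)(p-1)$, $\gamma_l=\beta_l-(n-1)$. Let $\bar f$ be a $C^1$ function with $\bar f=f$ on $(-d^-,d^+)$, $\bar f=0$ on $(-\infty,-d^--1)\cup(d^++1,+\infty)$, and $u\bar f(u)\le0$ elsewhere, and set $g_l(x,t)=k(e^t)\bar f(xe^{-\alpha_lt})e^{\alpha_l(l-1)t}$. Consider the system $$\dot x_l=\alpha_lx_l+y_l|y_l|^{\frac{2-p}{p-1}},\qquad \dot y_l=\gamma_ly_l-g_l(x_l,t),$$ and denote by $(x_l(t,\sigma,\mathbf Q),y_l(t,\sigma,\mathbf Q))$ its solution taking the value $\mathbf Q$ at $t=\sigma$. Let $\mathbf Q=(Q_x,Q_y)\in\mathbb R^2$ and $\sigma\in\mathbb R$ with $-d^-<Q_xe^{-\alpha_l\sigma}<d^+$.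 Suppose there exists $\sigma'>\sigma$ such that $-d^-<x_l(\sigma',\sigma,\mathbf Q)e^{-\alpha_l\sigma'}<d^+$. Then $-d^-<x_l(t,\sigma,\mathbf Q)e^{-\alpha_lt}<d^+$ for every $t\in(\sigma,\sigma')$. *)

(* Defs.v *)
From Stdlib Require Import Reals Lra.
From Coquelicot Require Import Coquelicot.
Open Scope R_scope.

Definition spow (u a : R) : R :=
  if Req_EM_T u 0 then 0 else u * Rpower (Rabs u) a.

Definition is_C1 (f : R -> R) : Prop :=
  (forall x, ex_derive f x) /\ (forall x, continuous (Derive f) x).

Definition is_C1_pos (f : R -> R) : Prop :=
  (forall x, 0 < x -> ex_derive f x) /\ (forall x, 0 < x -> continuous (Derive f) x).

Definition l_exp (p q delta : R) : R := p * (q + delta) / (p + delta).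
Definition alpha_l (l p : R) : R := p / (l - p).
Definition beta_l (l p : R) : R := (alpha_l l p + 1) * (p - 1).
Definition gamma_l (n : nat) (l p : R) : R := beta_l l p - (INR n - 1).

Definition g_l (k fbar : R -> R) (l p : R) (x t : R) : R :=
  k (exp t) * fbar (x * exp (- alpha_l l p * t)) * exp (alpha_l l p * (l - 1) * t).

(* Main.v *)
Require Import Defs.
From Stdlib Require Import Reals Lra.
From Coquelicot Require Import Coquelicot.
Open Scope R_scope.
Definition pos (z : R) := Rmax z 0.

Lemma pos_sq_bound x h :
  Rabs (pos (x + h) ^ 2 - pos x ^ 2 - 2 * pos x * h) <= 2 * h ^ 2.
Proof.
  unfold pos, Rmax.
  destruct (Rle_dec (x+h) 0); destruct (Rle_dec x 0); apply Rabs_le; split; nra.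
Qed.

Lemma is_derive_pos_sq x : is_derive (fun z => pos z ^ 2) x (2 * pos x).
Proof.
  apply is_derive_Reals. intros eps Heps.
  exists (mkposreal (eps / 4) ltac:(lra)). intros h Hh0 Hh. simpl in Hh.
  pose proof (pos_sq_bound x h) as B.
  replace ((pos (x + h) ^ 2 - pos x ^ 2) / h - 2 * pos x)
    with ((pos (x + h) ^ 2 - pos x ^ 2 - 2 * pos x * h) / h) by (field; auto).
  unfold Rdiv. rewrite Rabs_mult, Rabs_inv.
  assert (0 < Rabs h) by (apply Rabs_pos_lt; auto).
  apply Rle_lt_trans with (2 * h ^ 2 * / Rabs h).
  { apply Rmult_le_compat_r; [left; apply Rinv_0_lt_compat; auto | auto]. }
  replace (2 * h ^ 2 * / Rabs h) with (2 * Rabs h).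
  lra. replace (h ^ 2) with (Rabs h * Rabs h). field. lra. rewrite <- Rabs_mult. simpl. rewrite Rmult_1_r. apply Rabs_pos_eq. nra.
Qed.

Lemma is_derive_pos_sq_comp (f : R -> R) x df :
  is_derive f x df -> is_derive (fun t => pos (f t) ^ 2) x (2 * pos (f x) * df).
Proof.
  intro H.
  pose proof (is_derive_comp (fun z => pos z ^ 2) f x _ _ (is_derive_pos_sq (f x)) H) as H2.
  eapply is_derive_ext; [intro t; reflexivity|].
  replace (2 * pos (f x) * df) with (scal df (2 * pos (f x))); [exact H2|].
  unfold scal; simpl; unfold mult; simpl. ring.
Qed.

Lemma derive_cont (f : R -> R) x l : is_derive f x l -> continuity_pt f x.
Proof.
  intro H. apply continuity_pt_filterlim. exact (ex_derive_continuous f x (ex_intro _ l H)).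
Qed.

Lemma pos_ge0 z : 0 <= pos z.
Proof. unfold pos, Rmax. destruct (Rle_dec z 0); lra. Qed.

Lemma pos_mul z : pos z * z = pos z * pos z.
Proof. unfold pos, Rmax. destruct (Rle_dec z 0); lra. Qed.

Lemma pos_eq0 z : z <= 0 -> pos z = 0.
Proof. unfold pos, Rmax. destruct (Rle_dec z 0); lra. Qed.

Lemma pos_gt z : 0 < z -> pos z = z.
Proof. unfold pos, Rmax. destruct (Rle_dec z 0); lra. Qed.

Lemma core (X y V G : R -> R) (g B Lg c s0 s1 : R) :
  s0 <= s1 -> 0 <= B -> 0 <= Lg ->
  (forall t, s0 <= t <= s1 -> is_derive X t (V t) /\ is_derive y t (g * y t - G t)) ->
  (forall t, s0 <= t <= s1 -> - V t <= B * pos (- y t)) ->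
  (forall t, s0 <= t <= s1 -> G t <= Lg * pos (c - X t)) ->
  c <= X s0 -> 0 <= y s0 -> c <= X s1.
Proof.
  intros Hs HB HL Hd HV HG HX0 Hy0.
  set (C := B + Lg + 2 * Rabs g).
  set (F := fun t => (pos (c - X t) ^ 2 + pos (- y t) ^ 2) * exp (- C * t)).
  set (dF := fun t => (2 * pos (c - X t) * (- V t) + 2 * pos (- y t) * (- (g * y t - G t)))
                       * exp (- C * t)
                     + (pos (c - X t) ^ 2 + pos (- y t) ^ 2) * (- C * exp (- C * t))).
  assert (HdF : forall t, s0 <= t <= s1 -> is_derive F t (dF t)).
  { intros t Ht. destruct (Hd t Ht) as [HXd Hyd]. unfold F, dF.
    apply (is_derive_mult (fun t => pos (c - X t) ^ 2 + pos (- y t) ^ 2) (fun t => exp (- C * t))).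
    - apply (is_derive_plus (fun t => pos (c - X t) ^ 2) (fun t => pos (- y t) ^ 2)).
      + apply (is_derive_pos_sq_comp (fun t => c - X t)).
        replace (- V t) with (0 - V t) by ring.
        apply (is_derive_minus (fun _ => c) X); [auto_derive; auto | exact HXd].
      + apply (is_derive_pos_sq_comp (fun t => - y t)).
        apply (is_derive_opp y). exact Hyd.
    - auto_derive; auto; ring.
    - intros u v; unfold mult; simpl; ring. }
  assert (Hneg : forall t, s0 <= t <= s1 -> dF t <= 0).
  { intros t Ht. unfold dF.
    pose proof (HV t Ht). pose proof (HG t Ht).
    set (P := pos (c - X t)) in *. set (Q := pos (- y t)) in *.
    assert (P0 : 0 <= P) by apply pos_ge0. assert (Q0 : 0 <= Q) by apply pos_ge0.
    assert (QY : Q * (- y t) = Q * Q) by apply pos_mul.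
    assert (E0 : 0 < exp (- C * t)) by apply exp_pos.
    assert (Hg : g <= Rabs g) by apply Rle_abs.
    assert (2 * P * (- V t) + 2 * Q * (- (g * y t - G t)) <= C * (P ^ 2 + Q ^ 2)).
    { assert (A1 : 2 * P * (- V t) <= 2 * P * (B * Q)) by (apply Rmult_le_compat_l; lra).
      assert (A2 : 2 * Q * G t <= 2 * Q * (Lg * P)) by (apply Rmult_le_compat_l; lra).
      assert (A3 : 2 * Q * (- (g * y t)) = 2 * g * (Q * Q)) by (rewrite <- QY; ring).
      assert (A4 : g * (Q * Q) <= Rabs g * (Q * Q)) by (apply Rmult_le_compat_r; nra).
      assert (A5 : 2 * P * Q <= P ^ 2 + Q ^ 2) by (pose proof (pow2_ge_0 (P - Q)); simpl in *; lra).
      assert (A6 : (B + Lg) * (2 * P * Q) <= (B + Lg) * (P ^ 2 + Q ^ 2)) by (apply Rmult_le_compat_l; lra).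
      assert (A7 : Rabs g * (Q * Q) <= Rabs g * (P ^ 2 + Q ^ 2)) by (apply Rmult_le_compat_l; [apply Rabs_pos| nra]).
      unfold C.
      replace (2 * Q * - (g * y t - G t)) with (2 * Q * (- (g * y t)) + 2 * Q * G t) by ring.
      rewrite A3. nra. }
    nra. }
  destruct (MVT_gen F s0 s1 dF) as [xi [Hxi Heq]].
  - intros t Ht. rewrite Rmin_left in Ht by lra. rewrite Rmax_right in Ht by lra.
    apply HdF; lra.
  - intros t Ht. rewrite Rmin_left in Ht by lra. rewrite Rmax_right in Ht by lra.
    apply (derive_cont F t (dF t)). apply HdF; lra.
  - rewrite Rmin_left in Hxi by lra. rewrite Rmax_right in Hxi by lra.
    assert (F s0 = 0).
    { unfold F. rewrite (pos_eq0 (c - X s0)) by lra. rewrite (pos_eq0 (- y s0)) by lra. ring. }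
    assert (dF xi * (s1 - s0) <= 0).
    { pose proof (Hneg xi Hxi). nra. }
    destruct (Rle_dec (c - X s1) 0) as [|Hn]; [lra|].
    exfalso. rewrite H in Heq. unfold F in Heq.
    rewrite (pos_gt (c - X s1)) in Heq by lra.
    pose proof (exp_pos (- C * s1)).
    assert (0 <= pos (- y s1) ^ 2) by (pose proof (pos_ge0 (- y s1)); nra).
    assert (0 < (c - X s1) ^ 2) by nra.
    assert (0 < ((c - X s1) ^ 2 + pos (- y s1) ^ 2) * exp (- C * s1)) by (apply Rmult_lt_0_compat; lra).
    lra.
Qed.

Lemma side (X y V G : R -> R) (g B Lg c s0 s1 t0 : R) :
  s0 < t0 < s1 -> X s0 < c -> X s1 < c -> c <= X t0 -> 0 <= B -> 0 <= Lg ->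
  (forall t, s0 <= t <= s1 -> is_derive X t (V t) /\ is_derive y t (g * y t - G t)) ->
  (forall t, s0 <= t <= s1 -> V t = 0 -> y t = 0) ->
  (forall t, s0 <= t <= s1 -> - V t <= B * pos (- y t)) ->
  (forall t, s0 <= t <= s1 -> G t <= Lg * pos (c - X t)) ->
  False.
Proof.
  intros Ht0 H0 H1 Hc HB HL Hd HVy HV HG.
  destruct (continuity_ab_maj X s0 s1) as [tm [Hmax Htm]].
  - lra.
  - intros t Ht. apply (derive_cont X t (V t)). apply Hd; auto.
  - assert (c <= X tm) by (pose proof (Hmax t0 ltac:(lra)); lra).
    assert (s0 < tm < s1).
    { destruct (Req_dec tm s0); [subst; lra|]. destruct (Req_dec tm s1); [subst; lra|]. lra. }
    destruct (Hd tm Htm) as [HXd _].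
    pose (pr := exist (fun l => derivable_pt_lim X tm l) (V tm) (proj1 (is_derive_Reals X tm (V tm)) HXd)).
    assert (HV0 : derive_pt X tm pr = 0).
    { apply (deriv_maximum X s0 s1 tm pr); try lra. intros u Hu1 Hu2. apply Hmax. lra. }
    simpl in HV0.
    assert (y tm = 0) by (apply HVy; auto).
    assert (c <= X s1).
    { apply (core X y V G g B Lg c tm s1); try lra.
      - intros t Ht. apply Hd. lra.
      - intros t Ht. apply HV. lra.
      - intros t Ht. apply HG. lra. }
    lra.
Qed.
Lemma Rpower_gt0 x a : 0 < Rpower x a.
Proof. unfold Rpower. apply exp_pos. Qed.

Lemma spow_neg u a : spow (- u) a = - spow u a.
Proof.
  unfold spow. destruct (Req_EM_T (-u) 0); destruct (Req_EM_T u 0); try lra.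
  rewrite Rabs_Ropp. ring.
Qed.

Lemma spow_zero u a : spow u a = 0 -> u = 0.
Proof.
  unfold spow. destruct (Req_EM_T u 0); auto. intro H.
  pose proof (Rpower_gt0 (Rabs u) a). destruct (Rmult_integral _ _ H); lra.
Qed.

Lemma spow_bound u a Ym e Eb : 0 <= a -> Rabs u <= Ym -> 0 < e <= Eb ->
  - (spow u a * e) <= Rpower Ym a * Eb * pos (- u).
Proof.
  intros Ha Hu He. unfold spow.
  pose proof (Rpower_gt0 Ym a).
  destruct (Req_EM_T u 0).
  - pose proof (pos_ge0 (- u)).
    assert (0 <= Rpower Ym a * Eb * pos (-u)) by (apply Rmult_le_pos; [apply Rmult_le_pos|]; lra). lra.
  - pose proof (Rpower_gt0 (Rabs u) a).
    destruct (Rle_dec 0 u).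
    + pose proof (pos_ge0 (- u)).
      assert (0 <= Rpower Ym a * Eb * pos (-u)) by (apply Rmult_le_pos; [apply Rmult_le_pos|]; lra).
      assert (0 <= u * Rpower (Rabs u) a * e) by (apply Rmult_le_pos; [apply Rmult_le_pos|]; lra). lra.
    + rewrite pos_gt by lra.
      assert (Rpower (Rabs u) a <= Rpower Ym a).
      { apply Rle_Rpower_l; auto. split; auto. apply Rabs_pos_lt; auto. }
      assert (0 < - u) by lra.
      assert (- u * Rpower (Rabs u) a <= - u * Rpower Ym a) by (apply Rmult_le_compat_l; lra).
      assert (- u * Rpower (Rabs u) a * e <= - u * Rpower Ym a * Eb).
      { apply Rmult_le_compat; nra. }
      nra.
Qed.

Lemma lip (f : R -> R) lo hi L : (forall z, ex_derive f z) ->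
  (forall z, lo <= z <= hi -> Rabs (Derive f z) <= L) ->
  forall u v, lo <= u -> u <= v -> v <= hi -> Rabs (f v - f u) <= L * (v - u).
Proof.
  intros Hd HL u v H1 H2 H3.
  destruct (MVT_gen f u v (Derive f)) as [c [Hc Heq]].
  - intros z _. apply Derive_correct. auto.
  - intros z _. apply (derive_cont f z (Derive f z)). apply Derive_correct; auto.
  - rewrite Rmin_left in Hc by lra. rewrite Rmax_right in Hc by lra.
    rewrite Heq, Rabs_mult, (Rabs_pos_eq (v - u)) by lra.
    apply Rmult_le_compat_r; [lra|]. apply HL; lra.
Qed.
Theorem lemma3p5
  (n : nat) (p q delta dm dp : R) (b f k h fbar : R -> R)
  (* n > p > 1, p in (1,2] *)
  (Hnp : p < INR n) (Hp1 : 1 < p) (Hp2 : p <= 2)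
  (* hypothesis (F) *)
  (Hq : 2 < q) (Hb : is_C1 b) (Hf : is_C1 f)
  (Hdm : 0 < dm) (Hdp : 0 < dp)
  (Hbpos : forall u, - dm < u < dp -> 0 < b u)
  (Hbdm : b (- dm) = 0) (Hbdp : b dp = 0)
  (HfF : forall u, f u = spow u (q - 2) * b u)
  (* hypothesis (K) *)
  (Hk : is_C1_pos k) (Hdelta : - p < delta)
  (HkK : forall r, 0 < r -> k r = h r * Rpower r delta)
  (Hhpos : forall r, 0 < r -> 0 < h r)
  (Hhder : forall r, 0 < r -> ex_derive h r)
  (Hh0 : exists L0, 0 < L0 /\ filterlim h (at_right 0) (locally L0))
  (Hhinf : exists Linf, 0 < Linf /\ filterlim h (Rbar_locally p_infty) (locally Linf))
  (Hh'0 : exists M eps, 0 < eps /\ forall r, 0 < r < eps -> Derive h r * r <= M)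
  (Hh'inf : exists varpi, 0 < varpi /\
      filterlim (fun r => Derive h r * Rpower r (1 + varpi))
                (Rbar_locally p_infty) (locally 0))
  (* l > np/(n-p) *)
  (Hl : INR n * p / (INR n - p) < l_exp p q delta)
  (* the truncation fbar *)
  (Hfbar : is_C1 fbar)
  (Hfbar_eq : forall u, - dm < u < dp -> fbar u = f u)
  (Hfbar_0 : forall u, u < - dm - 1 \/ dp + 1 < u -> fbar u = 0)
  (Hfbar_sign : forall u, (- dm - 1 <= u <= - dm \/ dp <= u <= dp + 1) -> u * fbar u <= 0)
  (* the trajectory (x,y) through Q = (Qx,Qy) at time sigma, on [sigma, sigma'] *)
  (Qx Qy sigma sigma' : R) (x y : R -> R)
  (Hss : sigma < sigma')
  (Hx0 : x sigma = Qx) (Hy0 : y sigma = Qy)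
  (Hode : forall t, sigma <= t <= sigma' ->
      is_derive x t (alpha_l (l_exp p q delta) p * x t
                     + spow (y t) ((2 - p) / (p - 1)))
      /\ is_derive y t (gamma_l n (l_exp p q delta) p * y t
                     - g_l k fbar (l_exp p q delta) p (x t) t))
  (HQ : - dm < Qx * exp (- alpha_l (l_exp p q delta) p * sigma) < dp)
  (Hs' : - dm < x sigma' * exp (- alpha_l (l_exp p q delta) p * sigma') < dp) :
  forall t, sigma < t < sigma' ->
    - dm < x t * exp (- alpha_l (l_exp p q delta) p * t) < dp.
Proof.
  intros t Ht.
  set (L := l_exp p q delta) in *.
  set (al := alpha_l L p) in *.
  set (ga := gamma_l n L p) in *.
  set (a := (2 - p) / (p - 1)) in *.
  assert (Ha : 0 <= a) by (unfold a; apply Rdiv_le_0_compat; lra).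
  set (Xf := fun t => x t * exp (- al * t)).
  set (V := fun t => spow (y t) a * exp (- al * t)).
  set (K := fun t => k (exp t) * exp (al * (L - 1) * t)).
  set (G := fun t => K t * fbar (Xf t)).
  assert (HG : forall t, G t = g_l k fbar L p (x t) t).
  { intro u. unfold G, K, Xf, g_l. fold al. ring. }
  assert (Hd : forall t, sigma <= t <= sigma' ->
            is_derive Xf t (V t) /\ is_derive y t (ga * y t - G t)).
  { intros u Hu. destruct (Hode u Hu) as [Hx Hy]. split.
    - unfold Xf, V.
      eapply is_derive_ext; [intro; reflexivity|].
      replace (spow (y u) a * exp (- al * u)) with
        ((al * x u + spow (y u) a) * exp (- al * u) + x u * (- al * exp (- al * u))) by ring.
      apply (is_derive_mult x (fun t => exp (- al * t))); [exact Hx| |].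
      + auto_derive; auto; ring.
      + intros; unfold mult; simpl; ring.
    - rewrite HG. exact Hy. }
  assert (Hycont : forall u, sigma <= u <= sigma' -> continuity_pt y u).
  { intros u Hu. destruct (Hd u Hu) as [_ Hy]. exact (derive_cont _ _ _ Hy). }
  assert (HXcont : forall u, sigma <= u <= sigma' -> continuity_pt Xf u).
  { intros u Hu. destruct (Hd u Hu) as [Hx _]. exact (derive_cont _ _ _ Hx). }
  destruct (continuity_ab_maj y sigma sigma' ltac:(lra) Hycont) as [ty1 [Hty1 _]].
  destruct (continuity_ab_min y sigma sigma' ltac:(lra) Hycont) as [ty2 [Hty2 _]].
  set (Ym := Rabs (y ty1) + Rabs (y ty2) + 1).
  assert (HYm : forall u, sigma <= u <= sigma' -> Rabs (y u) <= Ym).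
  { intros u Hu. pose proof (Hty1 u Hu). pose proof (Hty2 u Hu).
    unfold Ym. pose proof (Rle_abs (y ty1)). pose proof (Rle_abs (- y ty2)).
    pose proof (Rabs_pos (y ty1)). pose proof (Rabs_pos (y ty2)).
    rewrite Rabs_Ropp in *. apply Rabs_le. lra. }
  set (Eb := exp (Rmax (- al * sigma) (- al * sigma'))).
  assert (HEb : forall u, sigma <= u <= sigma' -> 0 < exp (- al * u) <= Eb).
  { intros u Hu. split; [apply exp_pos|]. unfold Eb.
    assert (- al * u <= Rmax (- al * sigma) (- al * sigma')).
    { unfold Rmax. destruct (Rle_dec (- al * sigma) (- al * sigma')); nra. }
    destruct (Rle_lt_or_eq_dec _ _ H) as [H'|H']; [left; apply exp_increasing; auto| rewrite H'; lra]. }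
  set (B := Rpower Ym a * Eb).
  assert (HB : 0 <= B).
  { unfold B. pose proof (Rpower_gt0 Ym a). pose proof (exp_pos (Rmax (- al * sigma) (- al * sigma'))).
    unfold Eb. nra. }
  assert (HKpos : forall u, 0 < K u).
  { intro u. unfold K. apply Rmult_lt_0_compat; [|apply exp_pos].
    rewrite HkK by apply exp_pos. apply Rmult_lt_0_compat; [apply Hhpos, exp_pos | apply Rpower_gt0]. }
  assert (HKcont : forall u, continuity_pt K u).
  { intro u. assert (ex_derive k (exp u)) by (apply (proj1 Hk); apply exp_pos).
    destruct H as [dk Hdk].
    apply (derive_cont K u (dk * exp u * exp (al * (L - 1) * u) + k (exp u) * (al * (L - 1) * exp (al * (L - 1) * u)))).
    unfold K. apply (is_derive_mult (fun t => k (exp t)) (fun t => exp (al * (L - 1) * t))).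
    - eapply is_derive_ext; [intro; reflexivity|].
      pose proof (is_derive_comp k exp u dk (exp u) Hdk (is_derive_exp u)) as Hc.
      replace (dk * exp u) with (scal (exp u) dk); [exact Hc|]. unfold scal; simpl; unfold mult; simpl; ring.
    - auto_derive; auto; ring.
    - intros; unfold mult; simpl; ring. }
  destruct (continuity_ab_maj K sigma sigma' ltac:(lra) (fun u _ => HKcont u)) as [tK [HtK _]].
  set (Kb := K tK).
  destruct (continuity_ab_maj Xf sigma sigma' ltac:(lra) HXcont) as [tx1 [Htx1 Htx1r]].
  destruct (continuity_ab_min Xf sigma sigma' ltac:(lra) HXcont) as [tx2 [Htx2 Htx2r]].
  set (lo := Rmin (Xf tx2) (- dm)).
  set (hi := Rmax (Xf tx1) dp).
  assert (Hlohi : lo <= hi).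
  { unfold lo, hi. pose proof (Rmin_r (Xf tx2) (- dm)). pose proof (Rmax_r (Xf tx1) dp). lra. }
  assert (HDcont : forall z, continuity_pt (Derive fbar) z).
  { intro z. apply continuity_pt_filterlim. apply (proj2 Hfbar). }
  destruct (continuity_ab_maj (Derive fbar) lo hi Hlohi (fun z _ => HDcont z)) as [tf1 [Htf1 _]].
  destruct (continuity_ab_min (Derive fbar) lo hi Hlohi (fun z _ => HDcont z)) as [tf2 [Htf2 _]].
  set (Lf := Rabs (Derive fbar tf1) + Rabs (Derive fbar tf2)).
  assert (HLf : forall z, lo <= z <= hi -> Rabs (Derive fbar z) <= Lf).
  { intros z Hz. pose proof (Htf1 z Hz). pose proof (Htf2 z Hz).
    unfold Lf. pose proof (Rle_abs (Derive fbar tf1)). pose proof (Rle_abs (- Derive fbar tf2)).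
    pose proof (Rabs_pos (Derive fbar tf1)). pose proof (Rabs_pos (Derive fbar tf2)).
    rewrite Rabs_Ropp in *. apply Rabs_le. lra. }
  assert (HLf0 : 0 <= Lf) by (unfold Lf; pose proof (Rabs_pos (Derive fbar tf1)); pose proof (Rabs_pos (Derive fbar tf2)); lra).
  pose proof (lip fbar lo hi Lf (proj1 Hfbar) HLf) as Hlip.
  assert (HKb : forall u, sigma <= u <= sigma' -> 0 < K u <= Kb).
  { intros u Hu. split; [apply HKpos|]. apply HtK; auto. }
  assert (HKb0 : 0 <= Kb * Lf) by (pose proof (HKpos tK); unfold Kb; nra).
  assert (HXr : forall u, sigma <= u <= sigma' -> lo <= Xf u <= hi).
  { intros u Hu. pose proof (Htx1 u Hu). pose proof (Htx2 u Hu).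
    unfold lo, hi. pose proof (Rmin_l (Xf tx2) (- dm)). pose proof (Rmax_l (Xf tx1) dp). lra. }
  assert (Hdplo : lo <= - dm) by (unfold lo; apply Rmin_r).
  assert (Hdphi : dp <= hi) by (unfold hi; apply Rmax_r).
  assert (Fabove : forall u, dp <= u -> fbar u <= 0).
  { intros u Hu. destruct (Rle_dec u (dp + 1)).
    - pose proof (Hfbar_sign u ltac:(lra)). nra.
    - rewrite Hfbar_0 by lra. lra. }
  assert (Fbelow : forall u, u <= - dm -> 0 <= fbar u).
  { intros u Hu. destruct (Rle_dec (- dm - 1) u).
    - pose proof (Hfbar_sign u ltac:(lra)). nra.
    - rewrite Hfbar_0 by lra. lra. }
  assert (HXs : - dm < Xf sigma < dp) by (unfold Xf; rewrite Hx0; exact HQ).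
  assert (HXs' : - dm < Xf sigma' < dp) by exact Hs'.
  change (- dm < Xf t < dp).
  destruct (Rlt_dec (Xf t) dp) as [Hlt|Hge].
  2:{ exfalso.
    apply (side Xf y V G ga B (Kb * Lf) dp sigma sigma' t); try lra; auto.
    - intros u Hu Hv. unfold V in Hv. apply (spow_zero (y u) a).
      pose proof (exp_pos (- al * u)). destruct (Rmult_integral _ _ Hv); lra.
    - intros u Hu. unfold V, B. apply spow_bound; auto.
    - intros u Hu. unfold G. pose proof (HKb u Hu). destruct (Rle_dec dp (Xf u)).
      + pose proof (Fabove _ r). pose proof (pos_ge0 (dp - Xf u)). nra.
      + rewrite pos_gt by lra. pose proof (HXr u Hu).
        pose proof (Hlip (Xf u) dp ltac:(lra) ltac:(lra) ltac:(lra)) as Hlp.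
        apply Rabs_le_between in Hlp. pose proof (Fabove dp ltac:(lra)).
        assert (fbar (Xf u) <= Lf * (dp - Xf u)) by lra.
        assert (K u * fbar (Xf u) <= K u * (Lf * (dp - Xf u))) by (apply Rmult_le_compat_l; lra).
        assert (K u * (Lf * (dp - Xf u)) <= Kb * (Lf * (dp - Xf u))) by (apply Rmult_le_compat_r; nra).
        lra. }
  split; [|exact Hlt].
  destruct (Rlt_dec (- dm) (Xf t)) as [Hlt2|Hge2]; [exact Hlt2|].
  exfalso.
  apply (side (fun u => - Xf u) (fun u => - y u) (fun u => spow (- y u) a * exp (- al * u))
              (fun u => - G u) ga B (Kb * Lf) dm sigma sigma' t); try lra; auto.
  - intros u Hu. destruct (Hd u Hu) as [Hx Hy]. split.
    + rewrite spow_neg. replace (- spow (y u) a * exp (- al * u)) with (- V u) by (unfold V; ring).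
      apply (is_derive_opp Xf). exact Hx.
    + replace (ga * - y u - - G u) with (- (ga * y u - G u)) by ring.
      apply (is_derive_opp y). exact Hy.
  - intros u Hu Hv. apply (spow_zero (- y u) a).
    pose proof (exp_pos (- al * u)). destruct (Rmult_integral _ _ Hv); lra.
  - intros u Hu. apply spow_bound; auto. rewrite Rabs_Ropp. auto.
  - intros u Hu. unfold G. pose proof (HKb u Hu). destruct (Rle_dec (Xf u) (- dm)).
    + pose proof (Fbelow _ r). pose proof (pos_ge0 (dm - - Xf u)). nra.
    + rewrite pos_gt by lra. pose proof (HXr u Hu).
      pose proof (Hlip (- dm) (Xf u) ltac:(lra) ltac:(lra) ltac:(lra)) as Hlp.
      apply Rabs_le_between in Hlp. pose proof (Fbelow (- dm) ltac:(lra)).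
      assert (- fbar (Xf u) <= Lf * (dm - - Xf u)) by lra.
      assert (K u * (- fbar (Xf u)) <= K u * (Lf * (dm - - Xf u))) by (apply Rmult_le_compat_l; lra).
      assert (K u * (Lf * (dm - - Xf u)) <= Kb * (Lf * (dm - - Xf u))) by (apply Rmult_le_compat_r; nra).
      lra.
Qed.
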